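(* Let $\mathbb{F}$ be an algebraically closed field of characteristic zero and $J_1=E_{12}$. Let $\underline{A}=(J_1,A_2,A_3)$ and $\underline{B}=(0,B_2,B_3)$ be elements of $\mathcal{N}_3^3$ such that $f(\underline{A})=f(\underline{B})$ for all $f\in S_{3,3}$. Then $f(\underline{A})=f(\underline{B})$ for all $f\in P_{3,3}$.
   Context: $E_{ij}$ is the $3\times3$ matrix unit. $\mathcal{N}_3^3$ is the set of triples of nilpotent $3\times3$ matrices over $\mathbb{F}$. $\mathrm{tr}(Y_{i_1}\cdots Y_{i_r})$ denotes the function $\underline{A}\mapsto\mathrm{tr}(A_{i_1}\cdots A_{i_r})$. $S_{3,3}$ is the set consisting of: $\mathrm{tr}(Y_iY_j),\ \mathrm{tr}(Y_i^2Y_j),\ \mathrm{tr}(Y_iY_j^2),\ \mathrm{tr}(Y_i^2Y_j^2),\ \mathrm{tr}(Y_i^2Y_j^2Y_iY_j)$ for $1\le i<j\le3$; $\mathrm{tr}(Y_1Y_2Y_3)$, $\mathrm{tr}(Y_1Y_3Y_2)$; $\mathrm{tr}(Y_i^2Y_jY_k)$ for $\{i,j,k\}=\{1,2,3\}$; $\mathrm{tr}(Y_1^2Y_2Y_1Y_3)$, $\mathrm{tr}(Y_2^2Y_1Y_2Y_3)$, $\mathrm{tr}(Y_3^2Y_1Y_3Y_2)$. $P_{3,3}=S_{3,3}\sqcup P'_{3,3}$, where $P'_{3,3}$ consists of $\mathrm{tr}(Y_i^2Y_j^2Y_k)$ and $\mathrm{tr}(Y_i^2Y_j^2Y_iY_k)$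 for $\{i,j,k\}=\{1,2,3\}$, and $\mathrm{tr}(Y_1^2Y_2^2Y_3^2)$. *)

(* Defs.v *)
From HB Require Import structures.
From mathcomp Require Import all_boot all_order all_algebra.
Set Implicit Arguments. Unset Strict Implicit. Unset Printing Implicit Defensive.
Import GRing.Theory.
Local Open Scope ring_scope.

Definition is_nilpotent (F : fieldType) (A : 'M[F]_3) : Prop :=
  exists k : nat, A ^+ k = 0.

Definition in_N33 (F : fieldType) (A1 A2 A3 : 'M[F]_3) : Prop :=
  [/\ is_nilpotent A1, is_nilpotent A2 & is_nilpotent A3].

(* E_{12}: 1 in row 1, column 2 (0-based: row 0, column 1). *)
Definition J1 (F : fieldType) : 'M[F]_3 := delta_mx (0 : 'I_3) (1 : 'I_3).

(* Words are sequences of indices in {1,2,3}; the word [:: i1; ...; ir]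
   stands for the trace function tr(Y_{i1} ... Y_{ir}). *)
Definition Ysel (F : fieldType) (A1 A2 A3 : 'M[F]_3) (i : nat) : 'M[F]_3 :=
  match i with 1%N => A1 | 2%N => A2 | _ => A3 end.

Definition trw (F : fieldType) (A1 A2 A3 : 'M[F]_3) (w : seq nat) : F :=
  \tr (\prod_(i <- w) Ysel A1 A2 A3 i).

Definition S33 : seq (seq nat) :=
  [:: (* tr(Y_iY_j), tr(Y_i^2Y_j), tr(Y_iY_j^2), tr(Y_i^2Y_j^2), tr(Y_i^2Y_j^2Y_iY_j), i<j *)
      [:: 1; 2]%N; [:: 1; 1; 2]%N; [:: 1; 2; 2]%N; [:: 1; 1; 2; 2]%N; [:: 1; 1; 2; 2; 1; 2]%N;
      [:: 1; 3]%N; [:: 1; 1; 3]%N; [:: 1; 3; 3]%N; [:: 1; 1; 3; 3]%N; [:: 1; 1; 3; 3; 1; 3]%N;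
      [:: 2; 3]%N; [:: 2; 2; 3]%N; [:: 2; 3; 3]%N; [:: 2; 2; 3; 3]%N; [:: 2; 2; 3; 3; 2; 3]%N;
      [:: 1; 2; 3]%N; [:: 1; 3; 2]%N;
      (* tr(Y_i^2Y_jY_k), {i,j,k} = {1,2,3} *)
      [:: 1; 1; 2; 3]%N; [:: 1; 1; 3; 2]%N; [:: 2; 2; 1; 3]%N;
      [:: 2; 2; 3; 1]%N; [:: 3; 3; 1; 2]%N; [:: 3; 3; 2; 1]%N;
      [:: 1; 1; 2; 1; 3]%N; [:: 2; 2; 1; 2; 3]%N; [:: 3; 3; 1; 3; 2]%N ].

Definition P'33 : seq (seq nat) :=
  [:: (* tr(Y_i^2Y_j^2Y_k), {i,j,k} = {1,2,3} *)
      [:: 1; 1; 2; 2; 3]%N; [:: 1; 1; 3; 3; 2]%N; [:: 2; 2; 1; 1; 3]%N;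
      [:: 2; 2; 3; 3; 1]%N; [:: 3; 3; 1; 1; 2]%N; [:: 3; 3; 2; 2; 1]%N;
      (* tr(Y_i^2Y_j^2Y_iY_k), {i,j,k} = {1,2,3} *)
      [:: 1; 1; 2; 2; 1; 3]%N; [:: 1; 1; 3; 3; 1; 2]%N; [:: 2; 2; 1; 1; 2; 3]%N;
      [:: 2; 2; 3; 3; 2; 1]%N; [:: 3; 3; 1; 1; 3; 2]%N; [:: 3; 3; 2; 2; 3; 1]%N;
      [:: 1; 1; 2; 2; 3; 3]%N ].

Definition P33 : seq (seq nat) := S33 ++ P'33.

(* Main.v *)
Require Import Defs.
From HB Require Import structures.
From mathcomp Require Import all_boot all_order all_algebra.
Import GRing.Theory.
Local Open Scope ring_scope.
Definition i0 : 'I_3 := @Ordinal 3 0 isT.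
Definition i1 : 'I_3 := @Ordinal 3 1 isT.
Definition i2 : 'I_3 := @Ordinal 3 2 isT.
Lemma mul3E (F : fieldType) (M N : 'M[F]_3) i j :
  (M * N) i j = M i i0 * N i0 j + M i i1 * N i1 j + M i i2 * N i2 j.
Proof.
rewrite [LHS]mxE !big_ord_recl big_ord0 addr0 addrA.
by congr (_ * _ + _ * _ + _ * _); congr (_ _ _); apply: val_inj.
Qed.
Lemma tr3E (F : fieldType) (M : 'M[F]_3) : \tr M = M i0 i0 + M i1 i1 + M i2 i2.
Proof.
rewrite /mxtrace !big_ord_recl big_ord0 addr0 addrA.
by congr (_ + _ + _); congr (M _ _); apply: val_inj.
Qed.
Lemma J1E (F : fieldType) i j : J1 F i j = ((nat_of_ord i == 0%N) && (nat_of_ord j == 1%N))%:R.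
Proof. by rewrite /J1 mxE. Qed.
Lemma id3E (F : fieldType) (i j : 'I_3) : (1 : 'M[F]_3) i j = (nat_of_ord i == nat_of_ord j)%:R.
Proof. by rewrite !mxE. Qed.
Lemma trJ1 (F : fieldType) (X : 'M[F]_3) : \tr (J1 F * X) = X i1 i0.
Proof. by rewrite tr3E !mul3E !J1E /=; rewrite !(mul0r, mul1r, add0r, addr0). Qed.

Lemma trw_zero (F : fieldType) (A1 A2 A3 : 'M[F]_3) (P : pred 'M[F]_3) :
  P 1 -> (forall M N, P M -> P N -> P (M * N)) ->
  P A1 -> P A2 -> P A3 -> (forall M, P M -> M i1 i0 = 0) ->
  (forall X, \tr (A1 * X) = X i1 i0) ->
  forall w, (1%N \in w) -> trw A1 A2 A3 w = 0.
Proof.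
move=> P1 PM PA1 PA2 PA3 Pz tA w /splitPr [u v].
have Pw : forall s, P (\prod_(i <- s) Ysel A1 A2 A3 i).
  move=> s; apply: (big_ind (fun M => P M)) => // i _; case: i => [|[|[|i]]] //=.
rewrite /trw big_cat big_cons /=.
rewrite mxtrace_mulC -mulmxA; apply: eq_trans (tA _) _; exact: Pz (PM _ _ (Pw v) (Pw u)).
Qed.

Lemma trwB (F : fieldType) (B2 B3 : 'M[F]_3) w : (1%N \in w) -> trw 0 B2 B3 w = 0.
Proof.
case/splitPr=> u v; rewrite /trw big_cat big_cons /=.
by rewrite mul0r mulr0 mxtrace0.
Qed.

Theorem lemma8p1 (F : closedFieldType) (charF0 : [pchar F] =i pred0)
    (A2 A3 B2 B3 : 'M[F]_3) :
  in_N33 (J1 F) A2 A3 -> in_N33 0 B2 B3 ->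
  (forall w, w \in S33 -> trw (J1 F) A2 A3 w = trw 0 B2 B3 w) ->
  forall w, w \in P33 -> trw (J1 F) A2 A3 w = trw 0 B2 B3 w.
Proof.
move=> _ _ hS w; rewrite mem_cat => /orP[/hS //|hw].
have h1w : (1%N \in w).
  by move: hw; rewrite /P'33 !inE; repeat case/orP => [/eqP -> //|]; move/eqP ->.
rewrite trwB //.
Ltac gw w := have := hS w isT; rewrite trwB // /trw !big_cons big_nil /= !mulr1 trJ1 ?mul3E.
have H12 : A2 i1 i0 = 0 by gw [:: 1; 2]%N.
have H13 : A3 i1 i0 = 0 by gw [:: 1; 3]%N.
have H22 : A2 i1 i2 * A2 i2 i0 = 0 by gw [:: 1; 2; 2]%N; rewrite H12 !(mul0r, mulr0, add0r, addr0).
have H33 : A3 i1 i2 * A3 i2 i0 = 0 by gw [:: 1; 3; 3]%N; rewrite H13 !(mul0r, mulr0, add0r, addr0).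
have H23 : A2 i1 i2 * A3 i2 i0 = 0 by gw [:: 1; 2; 3]%N; rewrite H12 H13 !(mul0r, mulr0, add0r, addr0).
have H32 : A3 i1 i2 * A2 i2 i0 = 0 by gw [:: 1; 3; 2]%N; rewrite H12 H13 !(mul0r, mulr0, add0r, addr0).
pose C1 := fun M : 'M[F]_3 => (M i1 i0 == 0) && (M i2 i0 == 0).
pose C2 := fun M : 'M[F]_3 => (M i1 i0 == 0) && (M i1 i2 == 0).
have C1M : forall M N, C1 M -> C1 N -> C1 (M * N).
  move=> M N /andP[/eqP a /eqP b] /andP[/eqP c /eqP d].
  by rewrite /C1 !mul3E a b c d !(mul0r, mulr0, add0r, addr0) !eqxx.
have C2M : forall M N, C2 M -> C2 N -> C2 (M * N).
  move=> M N /andP[/eqP a /eqP b] /andP[/eqP c /eqP d].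
  by rewrite /C2 !mul3E a b c d !(mul0r, mulr0, add0r, addr0) !eqxx.
have C11 : C1 1 by rewrite /C1 !id3E /= eqxx.
have C21 : C2 1 by rewrite /C2 !id3E /= eqxx.
have C1J : C1 (J1 F) by rewrite /C1 !J1E /= eqxx.
have C2J : C2 (J1 F) by rewrite /C2 !J1E /= eqxx.
have Pz1 : forall M, C1 M -> M i1 i0 = 0 by move=> M /andP[/eqP].
have Pz2 : forall M, C2 M -> M i1 i0 = 0 by move=> M /andP[/eqP].
have [p0|pn] := eqVneq (A2 i1 i2) 0.
  have [q0|qn] := eqVneq (A3 i1 i2) 0.
    apply: (@trw_zero _ _ _ _ C2 C21 C2M C2J _ _ Pz2 (@trJ1 F)) => //.
    - by rewrite /C2 H12 p0 eqxx.
    - by rewrite /C2 H13 q0 eqxx.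
  apply: (@trw_zero _ _ _ _ C1 C11 C1M C1J _ _ Pz1 (@trJ1 F)) => //.
  - by rewrite /C1 H12 eqxx /=; move/eqP: H32; rewrite mulf_eq0 (negbTE qn).
  - by rewrite /C1 H13 eqxx /=; move/eqP: H33; rewrite mulf_eq0 (negbTE qn).
apply: (@trw_zero _ _ _ _ C1 C11 C1M C1J _ _ Pz1 (@trJ1 F)) => //.
- by rewrite /C1 H12 eqxx /=; move/eqP: H22; rewrite mulf_eq0 (negbTE pn).
- by rewrite /C1 H13 eqxx /=; move/eqP: H23; rewrite mulf_eq0 (negbTE pn).
Qed.
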